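(* Let $G=(V,E,w)$ be a star graph with nonnegative edge weights. Then \[ \|H_G\|\leq \max_{e\in E} w_e+\sum_{e\in E} w_e. \]
   Context: A star graph is a complete bipartite graph $K_{1,m}$: one center vertex adjacent to all other vertices, with no other edges. Qubits are placed on the vertices; with Pauli operators $X_i,Y_i,Z_i$ on qubit $i$, define $h_{ij}=\frac12(I-X_iX_j-Y_iY_j-Z_iZ_j)$ and $H_G=\sum_{\{i,j\}\in E} w_{ij}h_{ij}$; $\|\cdot\|$ denotes the operator norm. *)

(* Defs.v *)
From HB Require Import structures.
From mathcomp Require Import all_boot all_order all_algebra algC.
Set Implicit Arguments. Unset Strict Implicit. Unset Printing Implicit Defensive.
Import Order.TTheory GRing.Theory Num.Theory.
Local Open Scope ring_scope.

(* Computational basis states of n qubits: bit strings indexed by 'I_n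
   (false = |0>, true = |1>). *)
Definition bstate (n : nat) := {ffun 'I_n -> bool}.

(* Operators on (C^2)^{\otimes n}, given by their matrix entries <x|A|y>. *)
Definition qop (n : nat) := bstate n -> bstate n -> algC.

Definition pauliX (a b : bool) : algC := if a != b then 1 else 0.
Definition pauliY (a b : bool) : algC :=
  if a == b then 0 else if b then - 'i else 'i.
Definition pauliZ (a b : bool) : algC :=
  if a == b then (if a then -1 else 1) else 0.

Definition qid (n : nat) : qop n := fun x y => (x == y)%:R.

Definition pauli2 (n : nat) (P : bool -> bool -> algC) (i j : 'I_n) : qop n :=
  fun x y => P (x i) (y i) * P (x j) (y j) *
             \prod_(k < n | (k != i) && (k != j)) ((x k == y k)%:R : algC).

Definition hterm (n : nat) (i j : 'I_n) : qop n :=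
  fun x y => 2^-1 * (qid x y - pauli2 pauliX i j x y
                      - pauli2 pauliY i j x y - pauli2 pauliZ i j x y).

(* A weighted simple graph on vertex set 'I_n: E is the adjacency relation,
   and each edge {i,j} is represented once by the pair i < j, with weight w i j. *)
Definition is_edge (n : nat) (E : rel 'I_n) (i j : 'I_n) : bool := ((i < j)%N) && E i j.

Definition hamiltonian (n : nat) (E : rel 'I_n) (w : 'I_n -> 'I_n -> algC) : qop n :=
  fun x y => \sum_(i < n) \sum_(j < n | is_edge E i j) w i j * hterm i j x y.

Definition simple_graph (n : nat) (E : rel 'I_n) : Prop :=
  (forall i j, E i j = E j i) /\ (forall i, E i i = false).

Definition star_graph (n : nat) (E : rel 'I_n) : Prop :=
  (1 < n)%N /\ exists c : 'I_n, forall i j, E i j = (i != j) && ((i == c) || (j == c)).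

Definition qapply (n : nat) (A : qop n) (v : bstate n -> algC) : bstate n -> algC :=
  fun x => \sum_(y : bstate n) A x y * v y.
Definition vnorm (n : nat) (v : bstate n -> algC) : algC :=
  sqrtC (\sum_(x : bstate n) `|v x| ^+ 2).

Definition opnorm_le (n : nat) (A : qop n) (c : algC) : Prop :=
  forall v : bstate n -> algC, vnorm (qapply A v) <= c * vnorm v.

Definition max_weight (n : nat) (E : rel 'I_n) (w : 'I_n -> 'I_n -> algC) : algC :=
  \big[Num.max/0]_(i < n) \big[Num.max/0]_(j < n | is_edge E i j) w i j.
Definition sum_weight (n : nat) (E : rel 'I_n) (w : 'I_n -> 'I_n -> algC) : algC :=
  \sum_(i < n) \sum_(j < n | is_edge E i j) w i j.

(* Main.v *)
Require Import Defs.
From mathcomp Require Import all_boot all_order all_algebra algC ring.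
Import Order.TTheory GRing.Theory Num.Theory.
Local Open Scope ring_scope.
Set Implicit Arguments. Unset Strict Implicit. Unset Printing Implicit Defensive.

Definition sw (n : nat) (i j : 'I_n) (x : bstate n) : bstate n :=
  [ffun k => if k == i then x j else if k == j then x i else x k].

Ltac swt := repeat (rewrite ?eqxx /=; case: eqP => //= ?; subst); try done.

Lemma swK n (i j : 'I_n) x : sw i j (sw i j x) = x.
Proof. apply/ffunP=> k; rewrite !ffunE; swt. Qed.

Lemma sw_inj n (i j : 'I_n) : injective (sw i j).
Proof. exact: (can_inj (@swK n i j)). Qed.

Lemma hterm_sw n (i j : 'I_n) (hij : i != j) (x y : bstate n) :
  hterm i j x y = (x == y)%:R - (y == sw i j x)%:R.
Proof.
rewrite /hterm /qid /pauli2.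
have [b|nb] := boolP [forall k, ((k != i) && (k != j)) ==> (x k == y k)].
  have P1 : \prod_(k < n | (k != i) && (k != j)) ((x k == y k)%:R : algC) = 1.
    by apply: big1 => k hk; move/forallP: b => /(_ k); rewrite hk /= => /eqP ->; rewrite eqxx.
  rewrite !P1 !mulr1.
  have E1 : (x == y) = (x i == y i) && (x j == y j).
    apply/eqP/andP => [->|[/eqP e1 /eqP e2]]; first by rewrite !eqxx.
    apply/ffunP=> k; case: (eqVneq k i) => [->//|ki]; case: (eqVneq k j) => [->//|kj].
    by move/forallP: b => /(_ k); rewrite ki kj /= => /eqP.
  have E2 : (y == sw i j x) = (y i == x j) && (y j == x i).
    apply/eqP/andP => [->|[/eqP e1 /eqP e2]].
      by rewrite !ffunE eqxx (eq_sym j) (negbTE hij) !eqxx.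
    apply/ffunP=> k; rewrite ffunE; case: (eqVneq k i) => [->//|ki]; case: (eqVneq k j) => [->//|kj].
    by move/forallP: b => /(_ k); rewrite ki kj /= => /eqP.
  rewrite E1 E2 /pauliX /pauliY /pauliZ.
  case: (x i); case: (x j); case: (y i); case: (y j) => /=;
   rewrite ?mulrNN ?mulNr ?mulrN -?expr2 ?sqrCi; by field.
have [k hk] : exists k, ~~ (((k != i) && (k != j)) ==> (x k == y k)).
  by apply/existsP; rewrite -negb_forall.
move: hk; rewrite negb_imply => /andP[hk nxy].
have P0 : \prod_(k < n | (k != i) && (k != j)) ((x k == y k)%:R : algC) = 0.
  by rewrite (bigD1 k) //= (negbTE nxy) mul0r.
have -> : (x == y) = false.
  by apply/negbTE; apply: contra nxy => /eqP ->.
have -> : (y == sw i j x) = false.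
  apply/negbTE; apply: contra nxy => /eqP ->; rewrite ffunE.
  by case/andP: hk => /negbTE -> /negbTE ->.
by rewrite !P0 !mulr0 !subr0 mulr0.
Qed.

Ltac swt2 := repeat (rewrite ?eqxx /=; case: eqP => //= ?; subst); try congruence.

Lemma sw0 n (i j : 'I_n) (x : bstate n) : x i = x j -> sw i j x = x.
Proof. move=> h; apply/ffunP=> k; rewrite !ffunE; swt2. Qed.

Lemma swC n (i j : 'I_n) (x : bstate n) : sw i j x = sw j i x.
Proof. apply/ffunP=> k; rewrite !ffunE; swt2. Qed.

Lemma sw1 n (c a b : 'I_n) (x : bstate n) : c <> a -> c <> b -> a <> b -> x c = x a ->
  sw c a (sw c b x) = sw a b x.
Proof. move=> ca cb ab h; apply/ffunP=> k; rewrite !ffunE; swt2. Qed.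

Lemma sw2 n (c a b : 'I_n) (x : bstate n) : c <> a -> c <> b -> a <> b -> x a = x b ->
  sw c a (sw c b x) = sw c b x.
Proof. move=> ca cb ab h; apply/ffunP=> k; rewrite !ffunE; swt2. Qed.

Lemma cyc3 n (v : bstate n -> algC) (c a b : 'I_n) (x : bstate n) : c <> a -> c <> b -> a <> b ->
  v (sw c a (sw c b x)) + v (sw c b (sw c a x)) + v x
  = v (sw c a x) + v (sw c b x) + v (sw a b x).
Proof.
move=> ca cb ab.
have : (x c = x a) \/ (x c = x b) \/ (x a = x b).
  by case: (x c); case: (x a); case: (x b); auto.
case=> [h|[h|h]].
- rewrite sw1 // (sw0 h); ring.
- rewrite (@sw1 _ c b a) //; last by move=> e; apply: ab.
  rewrite (swC b a) (sw0 h); ring.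
- rewrite sw2 // (@sw2 _ c b a) // ?(sw0 h) //; [ring | by move=> e; apply: ab].

Qed.

Section Sums.
Variables (n : nat) (v : bstate n -> algC).

Definition Nv := \sum_(x : bstate n) v x * (v x)^*.
Definition Cf (f : bstate n -> bstate n) := \sum_(x : bstate n) v (f x) * (v x)^*.
Definition dd (f : bstate n -> bstate n) x := v x - v (f x).
Definition Gf (f g : bstate n -> bstate n) := \sum_(x : bstate n) dd f x * (dd g x)^*.

Lemma Nv_real : Nv^* = Nv.
Proof. by rewrite /Nv rmorph_sum; apply: eq_bigr => x _; rewrite rmorphM /= conjCK mulrC. Qed.

Lemma Nv_ge0 : 0 <= Nv.
Proof. by rewrite /Nv; apply: sumr_ge0 => x _; rewrite -normCK exprn_ge0. Qed.

Lemma reidx (f : bstate n -> bstate n) (F : bstate n -> algC) :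
  (forall x, f (f x) = x) -> \sum_x F x = \sum_x F (f x).
Proof. move=> fK; exact: (reindex_inj (can_inj fK)). Qed.

Lemma Cf_real f : (forall x, f (f x) = x) -> (Cf f)^* = Cf f.
Proof.
move=> fK; rewrite /Cf rmorph_sum (reidx _ fK).
by apply: eq_bigr => x _; rewrite rmorphM /= conjCK fK mulrC.
Qed.

Lemma Gff f : (forall x, f (f x) = x) -> Gf f f = 2 * Nv - 2 * Cf f.
Proof.
move=> fK.
have e1 : \sum_x v (f x) * (v (f x))^* = Nv.
  by rewrite /Nv [RHS](reidx _ fK).
have e2 : \sum_x v x * (v (f x))^* = Cf f.
  by rewrite -[RHS](Cf_real fK) /Cf rmorph_sum; apply: eq_bigr => x _; rewrite rmorphM /= conjCK mulrC.
rewrite /Gf /dd.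
have -> : \sum_x (v x - v (f x)) * (v x - v (f x))^* =
  \sum_x (v x * (v x)^*) + \sum_x v (f x) * (v (f x))^* - \sum_x v x * (v (f x))^*
   - \sum_x v (f x) * (v x)^*.
  rewrite -!big_split -!sumrB /=; apply: eq_bigr => x _; rewrite rmorphB /=; ring.
by rewrite e1 e2 /Cf /Nv; ring.
Qed.

Lemma Gfg f g h : (forall x, f (f x) = x) -> (forall x, g (g x) = x) -> (forall x, h (h x) = x) ->
  (forall x, v (f (g x)) + v (g (f x)) + v x = v (f x) + v (g x) + v (h x)) ->
  2 * (Gf f g + (Gf f g)^*) = Gf f f + Gf g g - Gf h h.
Proof.
move=> fK gK hK cy.
rewrite (Gff fK) (Gff gK) (Gff hK).
have eG : Gf f g = Nv - Cf g - Cf f + \sum_x v (f x) * (v (g x))^*.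
  have e2 : \sum_x v x * (v (g x))^* = Cf g.
    by rewrite -[RHS](Cf_real gK) /Cf rmorph_sum; apply: eq_bigr => x _; rewrite rmorphM /= conjCK mulrC.
  rewrite -e2 /Cf /Nv /Gf /dd -!sumrB -big_split /=; apply: eq_bigr => x _; rewrite rmorphB /=; ring.
have eT1 : \sum_x v (f x) * (v (g x))^* = Cf (fun x => f (g x)).
  by rewrite (reidx _ gK) /Cf; apply: eq_bigr => x _; rewrite gK.
have eT2 : (\sum_x v (f x) * (v (g x))^*)^* = Cf (fun x => g (f x)).
  rewrite rmorph_sum (reidx _ fK) /Cf; apply: eq_bigr => x _; rewrite fK rmorphM /= conjCK mulrC //.
have ecy : Cf (fun x => f (g x)) + Cf (fun x => g (f x)) + Nv = Cf f + Cf g + Cf h.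
  rewrite /Cf /Nv -!big_split /=; apply: eq_bigr => x _.
  by rewrite -!mulrDl cy.
have eGc : (Gf f g)^* = Nv - Cf g - Cf f + (\sum_x v (f x) * (v (g x))^*)^*.
  by rewrite eG !rmorphD !rmorphN /= Nv_real (Cf_real fK) (Cf_real gK).
rewrite eGc eG eT2 eT1.
have -> : Cf h = Cf (fun x => f (g x)) + Cf (fun x => g (f x)) + Nv - Cf f - Cf g.
  by rewrite ecy; ring.
ring.
Qed.

End Sums.

Lemma Gf_ge0 n (v : bstate n -> algC) f : 0 <= Gf v f f.
Proof. by apply: sumr_ge0 => x _; rewrite -normCK exprn_ge0. Qed.

Lemma Nv_ge0' n (v : bstate n -> algC) : 0 <= Nv v.
Proof. by apply: sumr_ge0 => x _; rewrite -normCK exprn_ge0. Qed.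

Lemma core n (I : finType) (P : pred I) (om : I -> algC) (sg : I -> bstate n -> bstate n)
  (v : bstate n -> algC) (M : algC) :
  0 <= M ->
  (forall p, P p -> 0 <= om p) -> (forall p, P p -> om p <= M) ->
  (forall p x, sg p (sg p x) = x) ->
  (forall p q, P p -> P q -> p != q -> exists h : bstate n -> bstate n,
     (forall x, h (h x) = x) /\
     forall x, v (sg p (sg q x)) + v (sg q (sg p x)) + v x = v (sg p x) + v (sg q x) + v (h x)) ->
  Nv (fun x => \sum_(p | P p) om p * dd v (sg p) x)
    <= (M + \sum_(p | P p) om p) ^+ 2 * Nv v.
Proof.
move=> M0 hom hM hK hcy.
set Hv := fun x => _.
set W := \sum_(p | P p) om p.
set K := M + W.
have [A defA] : {A : I -> algC | forall p, A p = Gf v (sg p) (sg p)} by exists (fun p => Gf v (sg p) (sg p)).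
pose D p := \sum_x dd v (sg p) x * (v x)^*.
have omr p : P p -> (om p)^* = om p by move=> Pp; exact: conj_Creal (ger0_real (hom p Pp)).
have W0 : 0 <= W by apply: sumr_ge0.
have K0 : 0 <= K by apply: addr_ge0.
have Kr : K^* = K by exact: conj_Creal (ger0_real K0).
have hD p : D p = Nv v - Cf v (sg p).
  by rewrite /D /Nv /Cf -sumrB; apply: eq_bigr => x _; rewrite /dd mulrBl.
have hA p : A p = 2 * D p by rewrite defA Gff // hD; ring.
have Dr p : (D p)^* = D p by rewrite hD rmorphB /= Nv_real Cf_real.
have Ar p : (A p)^* = A p by rewrite hA rmorphM /= Dr conj_Creal // realn.
have A0 p : 0 <= A p by rewrite defA; exact: Gf_ge0.
pose G p q := Gf v (sg p) (sg q).
have eNH : Nv Hv = \sum_(p | P p) \sum_(q | P q) om p * om q * G p q.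
  transitivity (\sum_x \sum_(p | P p) \sum_(q | P q)
      om p * om q * (dd v (sg p) x * (dd v (sg q) x)^*)).
    apply: eq_bigr => x _; rewrite /Hv rmorph_sum /= mulr_suml.
    apply: eq_bigr => p Pp; rewrite mulr_sumr; apply: eq_bigr => q Pq.
    rewrite rmorphM /= (omr q Pq); ring.
  rewrite exchange_big; apply: eq_bigr => p Pp; rewrite exchange_big.
  by apply: eq_bigr => q Pq; rewrite /G /Gf mulr_sumr.
have e2NH : 2 * Nv Hv = \sum_(p | P p) \sum_(q | P q) om p * om q * (G p q + (G p q)^*).
  have -> : 2 * Nv Hv = Nv Hv + (Nv Hv)^* by rewrite Nv_real; ring.
  rewrite [in X in _ + X]eNH rmorph_sum /= eNH -big_split /=; apply: eq_bigr => p Pp.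
  rewrite rmorph_sum /= -big_split /=; apply: eq_bigr => q Pq.
  by rewrite !rmorphM /= omr // omr // mulrDr.
have Gpp p : G p p = A p by rewrite defA.
have per p : P p -> \sum_(q | P q) om p * om q * (2 * (G p q + (G p q)^*))
   <= \sum_(q | P q) om p * om q * (A p + A q) + 2 * (om p ^+ 2 * A p).
  move=> Pp; rewrite (bigD1 p) //= [X in _ <= X + _](bigD1 p) //= Gpp Ar.
  rewrite -subr_ge0.
  set s1 := \sum_(q | _) _; set s2 := \sum_(q | _) _.
  have -> : om p * om p * (A p + A p) + s1 + 2 * (om p ^+ 2 * A p) -
     (om p * om p * (2 * (A p + A p)) + s2) = s1 - s2 by ring.
  rewrite subr_ge0 /s1 /s2; apply: ler_sum => q /andP[Pq qp].
  have [h [hK' hc]] := hcy p q Pp Pq (negbT (introF eqP (fun e => (negP qp) (introT eqP (esym e))))).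
  rewrite /G (Gfg (hK p) (hK q) hK' (hc)) -!defA.
  apply: ler_wpM2l; first by apply: mulr_ge0; apply: hom.
  by rewrite lerBlDr lerDl Gf_ge0.
set Q := \sum_(p | P p) om p * A p.
have sum4 : 4 * Nv Hv <= \sum_(p | P p) \sum_(q | P q) om p * om q * (A p + A q)
    + 2 * \sum_(p | P p) om p ^+ 2 * A p.
  have -> : 4 * Nv Hv = 2 * (2 * Nv Hv) by ring.
  rewrite e2NH [X in _ <= _ + X]mulr_sumr mulr_sumr -big_split /=.
  apply: ler_sum => p Pp; apply: le_trans (per p Pp).
  by rewrite mulr_sumr le_eqVlt; apply/orP; left; apply/eqP; apply: eq_bigr => q _; ring.
have eAA : \sum_(p | P p) \sum_(q | P q) om p * om q * (A p + A q) = 2 * (W * Q).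
  transitivity (\sum_(p | P p) (om p * A p * W + om p * Q)).
    apply: eq_bigr => p _; rewrite /W /Q (mulr_sumr _ _ _ (om p * A p)) (mulr_sumr _ _ _ (om p)) -big_split /=.
    by apply: eq_bigr => q _; ring.
  have e1 : \sum_(p | P p) om p * A p * W = Q * W by rewrite /Q mulr_suml.
  have e2 : \sum_(p | P p) om p * Q = W * Q by rewrite /W mulr_suml.
  rewrite big_split /= e1 e2; ring.
have eM : \sum_(p | P p) om p ^+ 2 * A p <= M * Q.
  rewrite /Q mulr_sumr; apply: ler_sum => p Pp; rewrite expr2 -mulrA.
  apply: ler_wpM2r; [exact: mulr_ge0 (hom p Pp) (A0 p) | exact: hM].
have h4 : 4 * Nv Hv <= 2 * (K * Q).
  apply: le_trans sum4 _; rewrite eAA.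
  have -> : 2 * (K * Q) = 2 * (W * Q) + 2 * (M * Q) by rewrite /K; ring.
  by rewrite lerD2l ler_pM2l.
set Dt := \sum_x Hv x * (v x)^*.
have eDt : Dt = \sum_(p | P p) om p * D p.
  rewrite /Dt /Hv; under eq_bigr => x _ do rewrite mulr_suml.
  rewrite exchange_big; apply: eq_bigr => p _; rewrite /D mulr_sumr.
  by apply: eq_bigr => x _; ring.
have eQ : Q = 2 * Dt.
  by rewrite eDt mulr_sumr /Q; apply: eq_bigr => p _; rewrite hA; ring.
have Dtr : Dt^* = Dt.
  by rewrite eDt rmorph_sum; apply: eq_bigr => p Pp; rewrite rmorphM /= omr // Dr.
have ex : \sum_x (K * v x - Hv x) * (K * v x - Hv x)^*
    = K ^+ 2 * Nv v - K * Dt - K * Dt^* + Nv Hv.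
  rewrite /Dt rmorph_sum /Nv !mulr_sumr -!sumrB -big_split /=.
  apply: eq_bigr => x _; rewrite !rmorphB !rmorphM /= Kr conjCK; ring.
have ex0 : 0 <= K ^+ 2 * Nv v - K * Dt - K * Dt^* + Nv Hv.
  by rewrite -ex; apply: sumr_ge0 => x _; rewrite -normCK exprn_ge0.
rewrite -subr_ge0.
have -> : K ^+ 2 * Nv v - Nv Hv = 2^-1 * (2 * (K ^+ 2 * Nv v - K * Dt - K * Dt^* + Nv Hv)
    + (2 * (K * Q) - 4 * Nv Hv)).
  by rewrite Dtr eQ; field.
apply: mulr_ge0; first by rewrite invr_ge0 ler0n.
by apply: addr_ge0; [apply: mulr_ge0 | rewrite subr_ge0].
Qed.

Lemma maxC_ge (x y : algC) : 0 <= x -> 0 <= y ->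
  [/\ x <= Num.max x y, y <= Num.max x y & 0 <= Num.max x y].
Proof.
move=> hx hy; rewrite /Num.max /Order.max.
case: ifP => h.
  by split => //; exact: ltW.
have hyx : y <= x by rewrite real_leNgt ?h // ger0_real.
by split.
Qed.

Lemma bigmax_seq (I : eqType) (r : seq I) (P : pred I) (F : I -> algC) :
  (forall i, P i -> 0 <= F i) ->
  0 <= \big[Num.max/0]_(i <- r | P i) F i /\
  forall i, i \in r -> P i -> F i <= \big[Num.max/0]_(i <- r | P i) F i.
Proof.
move=> hF; elim: r => [|a r [IH0 IH]]; first by rewrite big_nil.
rewrite big_cons; case: ifP => Pa.
  have [m1 m2 m3] := maxC_ge (hF a Pa) IH0.
  split=> // i; rewrite in_cons => /orP[/eqP->|ir] Pi //.
  exact: le_trans (IH i ir Pi) m2.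
split=> // i; rewrite in_cons => /orP[/eqP->|ir] Pi; first by rewrite Pa in Pi.
exact: IH.
Qed.

Lemma bigmax_fin (I : finType) (P : pred I) (F : I -> algC) :
  (forall i, P i -> 0 <= F i) ->
  0 <= \big[Num.max/0]_(i | P i) F i /\
  forall i, P i -> F i <= \big[Num.max/0]_(i | P i) F i.
Proof.
move=> hF; have [h1 h2] := bigmax_seq (index_enum I) hF.
by split=> // i Pi; apply: h2 => //; rewrite mem_index_enum.
Qed.

Lemma happly n (i j : 'I_n) (hij : i != j) (v : bstate n -> algC) x :
  \sum_y hterm i j x y * v y = v x - v (sw i j x).
Proof.
under eq_bigr => y _ do rewrite hterm_sw // mulrBl.
rewrite sumrB; congr (_ - _).
  rewrite (bigD1 x) //= eqxx mul1r big1 ?addr0 // => y /negbTE.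
  by rewrite eq_sym => ->; rewrite mul0r.
rewrite (bigD1 (sw i j x)) //= eqxx mul1r big1 ?addr0 // => y /negbTE ->.
by rewrite mul0r.
Qed.

Unset Implicit Arguments.

Theorem lemma1 (n : nat) (E : rel 'I_n) (w : 'I_n -> 'I_n -> algC)
  (hE : simple_graph E) (hstar : star_graph E)
  (hw : forall i j : 'I_n, is_edge E i j -> 0 <= w i j) :
  opnorm_le (hamiltonian E w) (max_weight E w + sum_weight E w).
Proof.
have [n1 [c hc]] := hstar.
pose P := fun p : 'I_n * 'I_n => is_edge E p.1 p.2.
pose o := fun p : 'I_n * 'I_n => if p.1 == c then p.2 else p.1.
pose sg := fun p => sw c (o p).
pose om := fun p : 'I_n * 'I_n => w p.1 p.2.
have hP p : P p -> ((p.1 < p.2)%N && (p.1 != p.2)) && ((p.1 == c) || (p.2 == c)).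
  by rewrite /P /is_edge hc => /andP[-> /andP[-> ->]].
have ho p : P p -> o p != c.
  move=> Pp; have /andP[/andP[_ ne] hor] := hP p Pp; rewrite /o; case: ifP => h1.
    by move/eqP: h1 => h1; rewrite -h1 eq_sym.
  by move: hor; rewrite h1.
have hsw p x : P p -> sw p.1 p.2 x = sg p x.
  move=> Pp; have /andP[_ hor] := hP p Pp; rewrite /sg /o; case: ifP => h1.
    by move/eqP: h1 => ->.
  by move: hor; rewrite h1 /= => /eqP ->; rewrite swC.
have hoinj p q : P p -> P q -> o p = o q -> p = q.
  case: p => [i j]; case: q => [i' j'] Pp Pq.
  have := hP _ Pp; have := hP _ Pq; rewrite /o /=.
  move=> /andP[/andP[lt' _] or'] /andP[/andP[lt _] or].
  case: (eqVneq i c) => [ei|ic]; case: (eqVneq i' c) => [ei'|i'c] /= e.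
  - by rewrite ei ei' e.
  - move: or'; rewrite (negbTE i'c) /= => /eqP ej'.
    by move: lt lt'; rewrite ei e ej' => h1 h2; have := ltn_trans h1 h2; rewrite ltnn.
  - move: or; rewrite (negbTE ic) /= => /eqP ej.
    by move: lt lt'; rewrite ei' -e ej => h1 h2; have := ltn_trans h1 h2; rewrite ltnn.
  - move: or'; rewrite (negbTE i'c) /= => /eqP ej'.
    move: or; rewrite (negbTE ic) /= => /eqP ej.
    by rewrite e ej ej'.
move=> v.
have eq1 x : qapply (hamiltonian E w) v x = \sum_(p | P p) om p * dd v (sg p) x.
  rewrite /qapply /hamiltonian.
  transitivity (\sum_y \sum_(p | P p) om p * hterm p.1 p.2 x y * v y).
    by apply: eq_bigr => y _; rewrite pair_big_dep mulr_suml.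
  rewrite exchange_big; apply: eq_bigr => p Pp.
  under eq_bigr => y _ do rewrite -mulrA.
  have /andP[/andP[_ ne] _] := hP p Pp.
  by rewrite -mulr_sumr happly // hsw.
have [Mx0 Mx] := @bigmax_fin _ predT (fun i : 'I_n => \big[Num.max/0]_(j < n | is_edge E i j) w i j)
  (fun i _ => proj1 (bigmax_fin (hw i))).
have hM p : P p -> om p <= max_weight E w.
  move=> Pp; apply: le_trans (Mx p.1 isT).
  exact: (proj2 (bigmax_fin (hw p.1))).
have eW : sum_weight E w = \sum_(p | P p) om p by rewrite /sum_weight pair_big_dep.
have K0 : 0 <= max_weight E w + sum_weight E w.
  by apply: addr_ge0 => //; rewrite eW; apply: sumr_ge0 => p Pp; exact: hw.
have hcore := @core n _ P om sg v (max_weight E w) Mx0 (fun p Pp => hw p.1 p.2 Pp) hM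
  (fun p x => swK _ _ _).
rewrite -eW in hcore.
have hcy : forall p q, P p -> P q -> p != q -> exists h : bstate n -> bstate n,
     (forall x, h (h x) = x) /\
     forall x, v (sg p (sg q x)) + v (sg q (sg p x)) + v x = v (sg p x) + v (sg q x) + v (h x).
  move=> p q Pp Pq pq; exists (sw (o p) (o q)); split; first exact: swK.
  move=> x; apply: cyc3.
  - by apply/eqP; rewrite eq_sym; exact: ho.
  - by apply/eqP; rewrite eq_sym; exact: ho.
  - by move=> e; apply: (negP pq); apply/eqP; exact: hoinj p q Pp Pq e.
have hN := hcore hcy.
rewrite /vnorm.
have e1 : \sum_x `|qapply (hamiltonian E w) v x| ^+ 2
    = Nv (fun x => \sum_(p | P p) om p * dd v (sg p) x).
  by rewrite /Nv; apply: eq_bigr => x _; rewrite normCK eq1.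
have e2 : \sum_x `|v x| ^+ 2 = Nv v by rewrite /Nv; apply: eq_bigr => x _; rewrite normCK.
rewrite e1 e2 -(sqrCK K0) -sqrtCM ?nnegrE ?exprn_ge0 ?Nv_ge0' //.
by rewrite ler_sqrtC ?nnegrE ?mulr_ge0 ?exprn_ge0 ?Nv_ge0'.
Qed.
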